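(* Let $\nu_n,\nu\in\Delta(V)$ with $\nu_n\to\nu$ weakly. Then $\pi^*(c,\nu)\le\liminf_{n\to\infty}\pi^*(c,\nu_n)$.
   Context: $V\subset\mathbb{R}$ is compact and $c:V\to\mathbb{R}$ is continuous with $v-c(v)\ge0$ on $V$. $\Delta(V)$ denotes Borel probability measures on $V$. For $\nu\in\Delta(V)$ and $p\in V$, $\pi(c,\nu,p)=\int_{\{v\ge p\}}(p-c(v))\nu(dv)$ and $\pi^*(c,\nu)=\max_{p\in V}\pi(c,\nu,p)$. *)

(* Defs.v *)
From HB Require Import structures.
From mathcomp Require Import all_boot all_order all_algebra.
From mathcomp Require Import all_classical all_reals all_analysis.
Set Implicit Arguments. Unset Strict Implicit. Unset Printing Implicit Defensive.
Import Order.TTheory GRing.Theory Num.Theory numFieldNormedType.Exports.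
Local Open Scope classical_set_scope.
Local Open Scope ring_scope.

(* A Borel probability measure on V (a subset of R) is represented as a
   probability measure on the Borel sets of R which is concentrated on V. *)
Definition supported_on (R : realType) (V : set R)
  (nu : probability R R) : Prop := nu (~` V) = 0%E.

Definition weak_cvg (R : realType) (V : set R)
  (nus : nat -> probability R R) (nu : probability R R) : Prop :=
  forall f : R -> R, {within V, continuous f} ->
    (exists M : R, forall x, V x -> `|f x| <= M) ->
    (fun n => Rintegral (nus n) V f) @ \oo --> Rintegral nu V f.

Definition profit (R : realType) (V : set R) (c : R -> R)
  (nu : probability R R) (p : R) : R :=
  Rintegral nu (V `&` [set v | p <= v]) (fun v => p - c v).

Definition opt_profit (R : realType) (V : set R) (c : R -> R)
  (nu : probability R R) : R :=
  sup [set profit V c nu p | p in V].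

(* Main.v *)
Require Import Defs.
From HB Require Import structures.
From mathcomp Require Import all_boot all_order all_algebra.
From mathcomp Require Import all_classical all_reals all_analysis.
From mathcomp Require Import measurable_realfun lra.
Import Order.TTheory GRing.Theory Num.Theory numFieldNormedType.Exports.
Local Open Scope classical_set_scope.
Local Open Scope ring_scope.

Lemma bnd_cont {R : realType} {V : set R} {g : R -> R} : compact V ->
  {within V, continuous g} -> exists M, forall v, V v -> `|g v| <= M.
Proof.
move=> cV gc; have /compact_bounded [M [_ HM]] := continuous_compact gc cV.
exists (`|M| + 1) => v Vv; apply: (HM (`|M|+1)).
  by rewrite (le_lt_trans (ler_norm M)) // ltrDl.
by exists v.
Qed.

Lemma int_cont {R : realType} {V : set R} {g : R -> R} (mu : probability R R) {D} :
  compact V -> {within V, continuous g} -> D `<=` V -> measurable D ->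
  mu.-integrable D (EFin \o g).
Proof.
move=> cV gc DV mD.
have [M HM] := bnd_cont cV gc.
apply: measurable_bounded_integrable => //.
- by rewrite (le_lt_trans (probability_le1 _ mD)) // ltry.
- apply: measurable_funS (subspace_continuous_measurable_fun (compact_measurable cV) gc) => //.
  exact: compact_measurable.
- exists M; split; first by rewrite num_real.
  by move=> x Mx y Dy; rewrite /= (le_trans (HM _ (DV _ Dy))) // ltW.
Qed.

Lemma int_patch {R : realType} {V : set R} {g : R -> R} (mu : probability R R) {D} :
  compact V -> {within V, continuous g} -> D `<=` V -> measurable D ->
  mu.-integrable setT (EFin \o (g \_ D)).
Proof.
move=> cV gc DV mD; rewrite -restrict_EFin.
apply/(integrable_mkcond _ mD). have H := int_cont mu cV gc DV mD. exact: H.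
Qed.

Lemma ex_pprime {R : realType} {V : set R} (p e : R) : compact V -> V p -> 0 <= e ->
  exists p', [/\ V p', p - e <= p', p' <= p &
     forall v, V v -> p - e <= v -> p' <= v].
Proof.
move=> cV Vp e0.
pose C := [set x : R | V (- x) /\ p - e <= - x].
have Cp : C (- p).
  by split; rewrite ?opprK // lerBlDr lerDl.
have C0 : C !=set0 by exists (- p).
have Cub : has_ubound C.
  exists (- (p - e)) => x [_ hx]; by rewrite lerNr.
have cC : closed C.
  have -> : C = -%R @^-1` (V `&` [set y | p - e <= y]) by [].
  apply: preimage_closed.
    by move=> x _; exact: opp_continuous.
  apply: closedI; first exact: (compact_closed (@Rhausdorff R)).
  exact: closed_ge.
have Cs : C (sup C).
  by have hc := (closure_id C).1 cC; have := closure_sup C0 Cub; rewrite -hc.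
exists (- sup C); case: Cs => Vs hs; split => //.
- by rewrite lerNl; apply: sup_upper_bound => //; split.
- move=> v Vv hv; rewrite lerNl; apply: sup_upper_bound; first by split.
  by split; rewrite ?opprK.
Qed.

Lemma fine_mu01 {R : realType} (mu : probability R R) D : measurable D ->
  0 <= fine (mu D) <= 1.
Proof.
move=> mD; have h1 := probability_le1 mu mD; have h0 := measure_ge0 mu D.
have hf : mu D \is a fin_num.
  by rewrite ge0_fin_numE // (le_lt_trans h1) // ltry.
by apply/andP; split; rewrite -lee_fin fineK.
Qed.

Lemma cst_within {R : realType} (V : set R) (a : R) :
  {within V, continuous (fun _ : R => a)}.
Proof. by apply: continuous_subspaceT => x; exact: cvg_cst. Qed.

Lemma cmp_helper {R : realType} {V : set R} (mu : probability R R) D1 D2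
  (g1 g2 : R -> R) (e : R) : compact V -> D1 `<=` V -> D2 `<=` V ->
  measurable D1 -> measurable D2 ->
  {within V, continuous g1} -> {within V, continuous g2} -> 0 <= e ->
  (forall x, V x -> (g1 \_ D1) x <= (g2 \_ D2) x + e) ->
  Rintegral mu D1 g1 <= Rintegral mu D2 g2 + e.
Proof.
move=> cV D1V D2V mD1 mD2 c1 c2 e0 H.
have mV : measurable V := compact_measurable cV.
rewrite [Rintegral mu D1 _]Rintegral_mkcond [Rintegral mu D2 _]Rintegral_mkcond.
have i1 := int_patch mu cV c1 D1V mD1.
have i2 := int_patch mu cV c2 D2V mD2.
have i3 := int_patch mu cV (cst_within V e) (@subset_refl _ V) mV.
have i4 : mu.-integrable setT (EFin \o (fun x => (g2 \_ D2) x + ((fun=> e) \_ V) x)).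
  rewrite (_ : EFin \o _ = (EFin \o (g2 \_ D2)) \+ (EFin \o ((fun=> e) \_ V))).
    by apply: integrableD.
  by apply/funext => x; rewrite /= EFinD.
apply: (@le_trans _ _ (Rintegral mu setT (fun x => (g2 \_ D2) x + ((fun=> e) \_ V) x))).
  apply: le_Rintegral => //.
  move=> x _; case: (pselect (V x)) => Vx.
    by rewrite (patchE _ V) mem_set //; exact: H.
  rewrite !patchE !memNset ?addr0 //; by [move/D1V | move/D2V].
rewrite RintegralD // lerD2l -(Rintegral_mkcond mu V (fun=> e)) Rintegral_cst //.
by have /andP[_ h] := fine_mu01 mu V mV; rewrite ler_piMr.
Qed.

Lemma id_within {R : realType} (V : set R) : {within V, continuous (fun v : R => v)}.
Proof. by apply: continuous_subspaceT => x; exact: cvg_id. Qed.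

Lemma cB_within {R : realType} {V : set R} {c : R -> R} (a : R) :
  {within V, continuous c} -> {within V, continuous (fun v => a - c v)}.
Proof. by move=> cc x; apply: cvgB; [exact: cvg_cst | exact: cc]. Qed.

Lemma profit_ub {R : realType} {V : set R} {c : R -> R} (mu : probability R R) :
  compact V -> {within V, continuous c} ->
  has_ubound [set profit V c mu p | p in V].
Proof.
move=> cV cc.
have mV : measurable V := compact_measurable cV.
have [B1 hB1] := bnd_cont cV (id_within V).
have [B2 hB2] := bnd_cont cV cc.
exists (B1 + B2) => _ [q Vq <-].
have B1ge : 0 <= B1 by apply: le_trans (hB1 _ Vq).
have B2ge : 0 <= B2 by apply: le_trans (hB2 _ Vq).
have mD : measurable (V `&` [set v | q <= v]).
  by apply: measurableI => //; apply: closed_measurable; exact: closed_ge.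
rewrite /profit.
apply: (@le_trans _ _ (Rintegral mu (V `&` [set v | q <= v]) (fun=> B1 + B2))).
  apply: le_Rintegral => //.
  - by have H := int_cont mu cV (cB_within q cc) (@subIsetl _ _ _) mD; exact: H.
  - by have H := int_cont mu cV (cst_within V (B1 + B2)) (@subIsetl _ _ _) mD; exact: H.
  move=> x [Vx _].
  have := hB1 _ Vq; have := hB2 _ Vx.
  rewrite /=. move=> h2 h1.
  by move: h1 h2; rewrite !ler_norml => /andP[? ?] /andP[? ?]; lra.
rewrite Rintegral_cst //.
have /andP[_ h] := fine_mu01 mu _ mD; rewrite ler_piMr //.
by rewrite addr_ge0.
Qed.

Lemma mul01 {R : realType} {a y e : R} : 0 <= a -> a <= 1 -> - e <= y -> 0 <= e ->
  - e <= a * y.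
Proof. move=> a0 a1 ye e0; nra. Qed.

Lemma key {R : realType} {V : set R} {c : R -> R}
  (nus : nat -> probability R R) (nu : probability R R) (p e : R) :
  compact V -> {within V, continuous c} -> (forall v, V v -> 0 <= v - c v) ->
  weak_cvg V nus nu -> V p -> 0 < e ->
  \forall n \near \oo, profit V c nu p - e < opt_profit V c (nus n).
Proof.
move=> cV cc hc wc Vp e0.
have mV : measurable V := compact_measurable cV.
pose e3 := e / 3.
have e30 : 0 < e3 by rewrite divr_gt0.
have [p' [Vp' hp'1 hp'2 hp'3]] := ex_pprime p e3 cV Vp (ltW e30).
pose phi := fun v : R => Num.min 1 (Num.max 0 ((v - (p - e3)) / e3)).
pose f := fun v => phi v * (p' - c v).
have phi01 v : 0 <= phi v /\ phi v <= 1.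
  by rewrite /phi le_min ler01 le_max lexx /= ge_min lexx.
have phi1 v : p <= v -> phi v = 1.
  move=> pv; have t1 : 1 <= (v - (p - e3)) / e3.
    by rewrite ler_pdivlMr // mul1r; lra.
  by rewrite /phi max_r ?min_l // (le_trans ler01).
have phi0 v : v < p - e3 -> phi v = 0.
  move=> pv; have t1 : (v - (p - e3)) / e3 <= 0.
    by rewrite pmulr_lle0 ?invr_gt0 //; lra.
  by rewrite /phi max_l // min_r // ler01.
have phic : continuous phi.
  move=> x.
  have h3 : {for x, continuous (fun v : R => (v - (p - e3)) / e3)}.
    by apply: cvgM; [apply: cvgB; [exact: cvg_id | exact: cvg_cst] | exact: cvg_cst].
  have k0 : {for x, continuous (fun=> (0:R))} by exact: cvg_cst.
  have k1 : {for x, continuous (fun=> (1:R))} by exact: cvg_cst.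
  have h2 := @continuous_max R R (fun=> 0) (fun v : R => (v - (p - e3)) / e3) x k0 h3.
  have h1 := @continuous_min R R (fun=> 1) _ x k1 h2.
  exact: h1.
have fc : {within V, continuous f}.
  move=> x; apply: cvgM; first exact: (continuous_subspaceT phic).
  exact: (cB_within p' cc).
have [Mf hMf] := bnd_cont cV fc.
have := wc f fc (ex_intro _ Mf hMf).
move=> /cvgr_gt /(_ (Rintegral nu V f - e3)) H.
have hlt : Rintegral nu V f - e3 < Rintegral nu V f by lra.
have {H} := H hlt.
apply: filterS => n Hn.
have pt : point = 0 :> R by [].
have mD q : measurable (V `&` [set v | q <= v]).
  by apply: measurableI => //; apply: closed_measurable; exact: closed_ge.
have hA : profit V c nu p <= Rintegral nu V f + e3.
  rewrite /profit; apply: (cmp_helper nu _ _ _ _ _ cV (@subIsetl _ _ _) (@subset_refl _ V) (mD p) mV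
    (cB_within p cc) fc (ltW e30)).
  move=> x Vx; rewrite (patchE _ V) mem_set // patchE.
  case: (pselect (p <= x)) => px.
    by rewrite mem_set // /f phi1 // mul1r; lra.
  rewrite memNset; last by move=> [_ /px].
  rewrite pt.
  have xp : x < p by rewrite ltNge; apply/negP.
  case: (pselect (p' <= x)) => p'x.
    have := hc x Vx; have [a0 a1] := phi01 x => hcx.
    have h : - e3 <= p' - c x by lra.
    have := mul01 a0 a1 h (ltW e30); rewrite /f; lra.
  have xp' : x < p - e3.
    rewrite ltNge; apply/negP => h; apply: p'x; exact: hp'3.
  by rewrite /f phi0 // mul0r; lra.
have hB : Rintegral (nus n) V f <= profit V c (nus n) p' + e3.
  rewrite /profit; apply: (cmp_helper (nus n) _ _ _ _ _ cV (@subset_refl _ V) (@subIsetl _ _ _) mV (mD p')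
    fc (cB_within p' cc) (ltW e30)).
  move=> x Vx; rewrite (patchE _ V) mem_set // patchE.
  case: (pselect (p' <= x)) => p'x.
    rewrite mem_set //.
    case: (pselect (p <= x)) => px.
      by rewrite /f phi1 // mul1r; lra.
    have xp : x < p by rewrite ltNge; apply/negP.
    have := hc x Vx; have [a0 a1] := phi01 x => hcx.
    have h : - e3 <= p' - c x by lra.
    have b0 : 0 <= 1 - phi x by lra.
    have b1 : 1 - phi x <= 1 by lra.
    have := mul01 b0 b1 h (ltW e30); rewrite /f; nra.
  rewrite memNset; last by move=> [_ /p'x].
  rewrite pt.
  have xp' : x < p - e3.
    rewrite ltNge; apply/negP => h; apply: p'x; exact: hp'3.
  by rewrite /f phi0 // mul0r; lra.
have hC : profit V c (nus n) p' <= opt_profit V c (nus n).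
  apply: sup_upper_bound; last by exists p'.
  by split; [exists (profit V c (nus n) p'); exists p' | exact: profit_ub].
rewrite /e3 in hA hB Hn; lra.
Qed.

Theorem lemmaI4 (R : realType) (V : set R) (c : R -> R)
  (nus : nat -> probability R R) (nu : probability R R) :
  compact V ->
  {within V, continuous c} ->
  (forall v, V v -> 0 <= v - c v) ->
  (forall n, supported_on V (nus n)) ->
  supported_on V nu ->
  weak_cvg V nus nu ->
  ((opt_profit V c nu)%:E <= limn_einf (fun n => (opt_profit V c (nus n))%:E))%E.
Proof.
move=> cV cc hc _ hnu wc.
have V0 : V !=set0.
  apply: contrapT => nV.
  have V0 : V = set0 by apply/seteqP; split => // x Vx; apply: nV; exists x.
  move: hnu; rewrite /supported_on V0 setC0 probability_setT => h.
  by have := @lte01 R; rewrite h ltxx.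
have hs : has_sup [set profit V c nu p | p in V].
  split; last exact: profit_ub.
  by case: V0 => v Vv; exists (profit V c nu v); exists v.
apply/lee_subgt0Pr => eps eps0.
have [_ [p Vp <-] hp] := sup_adherent eps0 hs.
apply: (@le_trans _ _ (profit V c nu p)%:E).
  by rewrite -EFinB lee_fin ltW.
apply/lee_subgt0Pr => e e0.
rewrite limn_einf_lim; apply: lime_ge; first exact: is_cvg_einfs.
have [N _ HN] := key nus nu p e cV cc hc wc Vp e0.
exists N => // m /= Nm.
apply: le_ereal_inf_tmp => _ [k /= mk <-].
rewrite -EFinB lee_fin ltW //; apply: HN => /=.
exact: leq_trans Nm mk.
Qed.
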